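(* The Markov spectrum $\mathcal{M}$ of $\mathbb{Q}((1/T))$ equals $$\{M(A): A=(g_i)_{i\in\mathbb{Z}} \text{ a doubly infinite sequence of polynomials } g_i\in\mathbb{Q}[T] \text{ with } \deg g_i\ge1\}.$$
   Context: $\mathbb{Q}((1/T))$ is the field of formal Laurent series in $1/T$ over $\mathbb{Q}$; $\deg$ of a nonzero series is the exponent of its leading term, $\deg0=-\infty$. For polynomials $c_0,c_1,\dots$ with $\deg c_j\ge1$ for $j\ge1$, $[c_0,c_1,\dots]=c_0+1/(c_1+1/(c_2+\cdots))$ converges in $\mathbb{Q}((1/T))$. For a doubly infinite sequence $A=(g_i)_{i\in\mathbb{Z}}$ of polynomials of positive degree, $\lambda_i(A)=[g_i,g_{i+1},\dots]+[0,g_{i-1},g_{i-2},\dots]$ and $M(A)=\sup_{i\in\mathbb{Z}}\deg\lambda_i(A)\in\mathbb{Z}\cup\{\infty\}$. A binary quadratic form is $Q=AX^2+BXY+CY^2$ with $A,B,C\in\mathbb{Q}((1/T))$ not all in $\mathbb{Q}(T)$, discriminant $D=B^2-4AC$; it is indefinite if $D\ne0$ is a square in $\mathbb{Q}((1/T))$. $m(Q)=\inf\{\deg Q(X,Y):X,Y\in\mathbb{Q}[T],(X,Y)\ne(0,0)\}$, and $\mathcal{M}=\{\tfrac{\deg D}{2}-m(Q):Q\text{ indefinite}\}$, with value $+\infty$ when $m(Q)=-\infty$. *)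

(* Defs.v *)
(* Q((1/T)) is modelled at the level of coefficient
   functions  c : int -> rat  (c k = coefficient of T^k); a Laurent series in
   1/T is such a function with support bounded above ([laurent]). *)
From mathcomp Require Import all_boot all_order all_algebra.
From mathcomp Require Import constructive_ereal.
From Stdlib Require Import ClassicalEpsilon.

Set Implicit Arguments.
Unset Strict Implicit.
Unset Printing Implicit Defensive.

Import Order.TTheory GRing.Theory Num.Theory.
Local Open Scope ring_scope.

Definition series := int -> rat.

Definition laurent (c : series) : Prop :=
  exists N : int, forall k : int, N < k -> c k = 0.

Definition is_top (c : series) (d : int) : Prop :=
  c d != 0 /\ forall k : int, d < k -> c k = 0.

(* exponent of the leading term (0 if there is none; only used when c <> 0) *)
Definition ltop (c : series) : int :=
  match excluded_middle_informative (exists d, is_top c d) with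
  | left H => proj1_sig (constructive_indefinite_description _ H)
  | right _ => 0
  end.

Definition deg (c : series) : \bar int :=
  match excluded_middle_informative (exists d, is_top c d) with
  | left H => (proj1_sig (constructive_indefinite_description _ H))%:E
  | right _ => -oo%E
  end.

Definition szero : series := fun _ => 0.
Definition sadd (a b : series) : series := fun k => a k + b k.
Definition sopp (a : series) : series := fun k => - a k.
Definition sscale (r : rat) (a : series) : series := fun k => r * a k.

Definition sbound (c : series) : int :=
  match excluded_middle_informative (laurent c) with
  | left H => proj1_sig (constructive_indefinite_description _ H)
  | right _ => 0
  end.

(* product: (ab)_k = sum_{i+j=k} a_i b_j, finite for Laurent series *)
Definition smul (a b : series) : series := fun k =>
  let ta := sbound a in let tb := sbound b in
  let n := ta + tb - k in
  if n < 0 then 0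
  else \sum_(j < `|n|%N.+1) a (ta - j%:Z) * b (k - ta + j%:Z).

Definition poly2s (p : {poly rat}) : series := fun k =>
  if 0 <= k then p`_(`|k|%N) else 0.

(* coefficients of the inverse: a j = coefficient of T^(d-j) of the series;
   returns [:: b_0; ...; b_m] where b_m is the coefficient of T^(-d-m) *)
Fixpoint inv_coefs (a : nat -> rat) (m : nat) : seq rat :=
  match m with
  | 0 => [:: (a 0%N)^-1]
  | m'.+1 => let s := inv_coefs a m' in
      rcons s (- (a 0%N)^-1 *
               \sum_(1 <= j < m'.+2) a j * nth 0 s (m'.+1 - j)%N)
  end.

(* multiplicative inverse in Q((1/T)) (for c = 0 this gives 0, as 0^-1 = 0 in rat) *)
Definition sinv (c : series) : series := fun k =>
  let d := ltop c in
  if k <= - d then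
    let n := `|- d - k|%N in nth 0 (inv_coefs (fun j => c (d - j%:Z)) n) n
  else 0.

Fixpoint cf_fin (c : nat -> {poly rat}) (n : nat) : series :=
  match n with
  | 0 => poly2s (c 0%N)
  | n'.+1 => sadd (poly2s (c 0%N)) (sinv (cf_fin (fun j => c j.+1) n'))
  end.

(* x = [c_0, c_1, ...] : limit of the finite continued fractions in the
   1/T-adic topology, i.e. deg (x - [c_0,...,c_n]) -> -oo *)
Definition cf_value (c : nat -> {poly rat}) (x : series) : Prop :=
  laurent x /\
  forall N : int, exists n0 : nat, forall n : nat, (n0 <= n)%N ->
    (deg (sadd x (sopp (cf_fin c n))) < N%:E)%E.

Definition is_lub (S : \bar int -> Prop) (x : \bar int) : Prop :=
  (forall y, S y -> (y <= x)%E) /\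
  (forall z, (forall y, S y -> (y <= z)%E) -> (x <= z)%E).
Definition is_glb (S : \bar int -> Prop) (x : \bar int) : Prop :=
  (forall y, S y -> (x <= y)%E) /\
  (forall z, (forall y, S y -> (z <= y)%E) -> (z <= x)%E).

(* lambda_i(A) = [g_i, g_{i+1}, ...] + [0, g_{i-1}, g_{i-2}, ...] *)
Definition is_lambda (g : int -> {poly rat}) (i : int) (l : series) : Prop :=
  exists x y : series,
    cf_value (fun j => g (i + j%:Z)) x /\
    cf_value (fun j => if j == 0%N then 0 else g (i - j%:Z)) y /\
    l = sadd x y.

Definition is_M (g : int -> {poly rat}) (v : \bar int) : Prop :=
  is_lub (fun e => exists i l, is_lambda g i l /\ e = deg l) v.

Definition in_QT (a : series) : Prop :=
  exists p q : {poly rat}, q != 0 /\ smul (poly2s q) a = poly2s p.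

Definition disc (A B C : series) : series :=
  sadd (smul B B) (sopp (sscale 4 (smul A C))).

Definition qf_eval (A B C : series) (X Y : {poly rat}) : series :=
  sadd (smul A (poly2s (X * X)))
       (sadd (smul B (poly2s (X * Y))) (smul C (poly2s (Y * Y)))).

Definition is_bqf (A B C : series) : Prop :=
  laurent A /\ laurent B /\ laurent C /\
  ~ (in_QT A /\ in_QT B /\ in_QT C).

Definition indefinite (A B C : series) : Prop :=
  disc A B C <> szero /\
  exists S : series, laurent S /\ smul S S = disc A B C.

Definition is_mQ (A B C : series) (m : \bar int) : Prop :=
  is_glb (fun e => exists X Y : {poly rat},
            (X != 0 \/ Y != 0) /\ e = deg (qf_eval A B C X Y)) m.

(* Markov spectrum: values deg(D)/2 - m(Q) (= +oo when m(Q) = -oo) *)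
Definition markov_spectrum (v : \bar int) : Prop :=
  exists A B C : series, is_bqf A B C /\ indefinite A B C /\
  exists (d : int) (m : \bar int),
    deg (disc A B C) = (2 * d)%:E /\ is_mQ A B C m /\ v = (d%:E - m)%E.

(* Main.v *)
Require Import Defs.
From HB Require Import structures.
From mathcomp Require Import all_boot all_order all_algebra.
From mathcomp Require Import constructive_ereal.
From mathcomp Require Import boolp.
From mathcomp Require Import zify ring lra.
From Stdlib Require Import ClassicalEpsilon FunctionalExtensionality ProofIrrelevance.

Set Implicit Arguments.
Unset Strict Implicit.
Unset Printing Implicit Defensive.
Import Order.TTheory GRing.Theory Num.Theory.
Local Open Scope ring_scope.


Definition ub (c : series) (t : int) := forall k : int, t < k -> c k = 0.

Lemma ub_laurent c t : ub c t -> laurent c.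
Proof. by move=> h; exists t. Qed.

Lemma ub_le c t t' : ub c t -> t <= t' -> ub c t'.
Proof. by move=> h le k lt; apply: h; lia. Qed.

Lemma sbound_ub c : laurent c -> ub c (sbound c).
Proof.
rewrite /sbound; case: excluded_middle_informative => // H _.
by case: (constructive_indefinite_description _ H).
Qed.

Definition conv (a b : series) (ta tb k : int) : rat :=
  let n := ta + tb - k in
  if n < 0 then 0
  else \sum_(j < `|n|%N.+1) a (ta - j%:Z) * b (k - ta + j%:Z).

Lemma smul_conv a b k : smul a b k = conv a b (sbound a) (sbound b) k.
Proof. by []. Qed.

Lemma conv_shiftl a b ta tb k : ub a ta -> conv a b (ta + 1) tb k = conv a b ta tb k.
Proof.
move=> ha; rewrite /conv.
case: (ltP (ta + tb - k) (-1)) => h1.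
  by rewrite !ifT //; lia.
case: (ltP (ta + tb - k) 0) => h2.
  have -> : ta + 1 + tb - k = 0 by lia.
  by rewrite ltxx /= big_ord1 ha ?mul0r //=; lia.
rewrite ifF; last by lia.
have -> : absz (ta + 1 + tb - k)%R = (absz (ta + tb - k)%R).+1 by lia.
rewrite big_ord_recl /= ha ?mul0r ?add0r; last by lia.
apply: eq_bigr => j _; congr (a _ * b _); rewrite /bump /=; lia.
Qed.

Lemma conv_shiftr a b ta tb k : ub b tb -> conv a b ta (tb + 1) k = conv a b ta tb k.
Proof.
move=> hb; rewrite /conv.
case: (ltP (ta + tb - k) (-1)) => h1.
  by rewrite !ifT //; lia.
case: (ltP (ta + tb - k) 0) => h2.
  have -> : ta + (tb + 1) - k = 0 by lia.
  by rewrite ltxx /= big_ord1 hb ?mulr0 //=; lia.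
rewrite ifF; last by lia.
have -> : absz (ta + (tb + 1) - k)%R = (absz (ta + tb - k)%R).+1 by lia.
rewrite big_ord_recr /= hb ?mulr0 ?addr0; last by lia.
by [].
Qed.

Lemma conv_lel a b ta ta' tb k : ub a ta -> ta <= ta' ->
  conv a b ta' tb k = conv a b ta tb k.
Proof.
move=> ha le.
have -> : ta' = ta + (absz (ta' - ta)%R)%:Z by lia.
elim: (absz _) => [|n IH]; first by rewrite addr0.
rewrite -IH -(@conv_shiftl a b (ta + n%:Z)); first by congr conv; lia.
by apply: ub_le ha _; lia.
Qed.

Lemma conv_ler a b ta tb tb' k : ub b tb -> tb <= tb' ->
  conv a b ta tb' k = conv a b ta tb k.
Proof.
move=> hb le.
have -> : tb' = tb + (absz (tb' - tb)%R)%:Z by lia.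
elim: (absz _) => [|n IH]; first by rewrite addr0.
rewrite -IH -(@conv_shiftr a b ta (tb + n%:Z)); first by congr conv; lia.
by apply: ub_le hb _; lia.
Qed.

Lemma smulE a b ta tb k : ub a ta -> ub b tb -> smul a b k = conv a b ta tb k.
Proof.
move=> ha hb.
have la := sbound_ub (ub_laurent ha); have lb := sbound_ub (ub_laurent hb).
rewrite smul_conv.
rewrite -(@conv_lel a b (sbound a) (Num.max (sbound a) ta)) //; last by rewrite le_max lexx.
rewrite -(@conv_ler a b _ (sbound b) (Num.max (sbound b) tb)) //; last by rewrite le_max lexx.
rewrite (@conv_lel a b ta (Num.max (sbound a) ta)) //; last by rewrite le_max lexx orbT.
by rewrite (@conv_ler a b ta tb (Num.max (sbound b) tb)) //; rewrite le_max lexx orbT.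
Qed.

Definition tr (a : series) (t : int) (N : nat) : {poly rat} := \poly_(j < N) a (t - j%:Z).

Lemma conv_poly a b ta tb (n N : nat) : (n < N)%N ->
  conv a b ta tb (ta + tb - n%:Z) = (tr a ta N * tr b tb N)`_n.
Proof.
move=> lt; rewrite /conv coefM.
rewrite ifF; last by lia.
have -> : absz (ta + tb - (ta + tb - n%:Z))%R = n by lia.
apply: eq_bigr => j _; rewrite !coef_poly.
have hj : (j < N)%N by have := ltn_ord j; lia.
have hj' : (n - j < N)%N by lia.
rewrite hj hj'; congr (a _ * b _); have := ltn_ord j; lia.
Qed.

Lemma conv_gt a b ta tb k : ta + tb < k -> conv a b ta tb k = 0.
Proof. by move=> h; rewrite /conv ifT //; lia. Qed.

Lemma smul_ub a b ta tb : ub a ta -> ub b tb -> ub (smul a b) (ta + tb).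
Proof. by move=> ha hb k lt; rewrite (smulE _ ha hb) conv_gt. Qed.

Lemma smul_poly a b ta tb (n N : nat) : ub a ta -> ub b tb -> (n < N)%N ->
  smul a b (ta + tb - n%:Z) = (tr a ta N * tr b tb N)`_n.
Proof. by move=> ha hb lt; rewrite (smulE _ ha hb) (conv_poly _ _ _ _ lt). Qed.

Lemma int_split (t k : int) : t < k \/ exists n : nat, k = t - n%:Z.
Proof.
case: (ltP t k) => h; first by left.
by right; exists (absz (t - k)%R); lia.
Qed.

Lemma coefM_eqN (p q q' : {poly rat}) (N n : nat) :
  (forall j, (j < N)%N -> q`_j = q'`_j) -> (n < N)%N -> (p * q)`_n = (p * q')`_n.
Proof.
move=> h lt; rewrite !coefM; apply: eq_bigr => j _; rewrite h //.
have := ltn_ord j; lia.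
Qed.

Lemma tr_smul a b ta tb N : ub a ta -> ub b tb ->
  forall j, (j < N)%N -> (tr (smul a b) (ta + tb) N)`_j = (tr a ta N * tr b tb N)`_j.
Proof. by move=> ha hb j lt; rewrite coef_poly lt (smul_poly ha hb lt). Qed.


Record LS := MkLS { sv : series; svP : laurent sv }.

Lemma LS_ext (x y : LS) : (forall k, sv x k = sv y k) -> x = y.
Proof.
case: x => a ha; case: y => b hb /= h.
have e : a = b by apply: functional_extensionality.
by subst b; rewrite (proof_irrelevance _ ha hb).
Qed.

HB.instance Definition _ := gen_eqMixin LS.
HB.instance Definition _ := gen_choiceMixin LS.

Lemma ubP (x : LS) : exists t, ub (sv x) t.
Proof. by case: x => a [t ht]; exists t. Qed.

Lemma ub_max a b ta tb : ub a ta -> ub b tb -> ub a (Num.max ta tb) /\ ub b (Num.max ta tb).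
Proof. by move=> ha hb; split; [apply: ub_le ha _|apply: ub_le hb _]; rewrite le_max lexx ?orbT. Qed.

Lemma ub_add a b t : ub a t -> ub b t -> ub (sadd a b) t.
Proof. by move=> ha hb k lt; rewrite /sadd ha ?hb ?addr0. Qed.

Lemma ub_opp a t : ub a t -> ub (sopp a) t.
Proof. by move=> ha k lt; rewrite /sopp ha ?oppr0. Qed.

Lemma ub0 t : ub szero t.
Proof. by []. Qed.

Definition lzero := MkLS (ub_laurent (@ub0 0)).

Lemma laurent_add (x y : LS) : laurent (sadd (sv x) (sv y)).
Proof.
case: (ubP x) => tx hx; case: (ubP y) => ty hy.
case: (ub_max hx hy) => h1 h2; exact: ub_laurent (ub_add h1 h2).
Qed.
Definition ladd x y := MkLS (laurent_add x y).

Lemma laurent_opp (x : LS) : laurent (sopp (sv x)).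
Proof. case: (ubP x) => tx hx; exact: ub_laurent (ub_opp hx). Qed.
Definition lopp x := MkLS (laurent_opp x).

Lemma laurent_mul (x y : LS) : laurent (smul (sv x) (sv y)).
Proof.
case: (ubP x) => tx hx; case: (ubP y) => ty hy; exact: ub_laurent (smul_ub hx hy).
Qed.
Definition lmul x y := MkLS (laurent_mul x y).

Lemma poly2s_ub p : ub (poly2s p) (size p)%:Z.
Proof.
move=> k lt; have hk : 0 <= k by lia.
rewrite /poly2s hk nth_default //; move: lt; rewrite (_ : size p = size (polyseq p)) //; lia.
Qed.

Definition P2 (p : {poly rat}) := MkLS (ub_laurent (@poly2s_ub p)).
Definition lone := P2 1.

Lemma laddA : associative ladd.
Proof. by move=> x y z; apply: LS_ext => k /=; rewrite /sadd addrA. Qed.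
Lemma laddC : commutative ladd.
Proof. by move=> x y; apply: LS_ext => k /=; rewrite /sadd addrC. Qed.
Lemma ladd0 : left_id lzero ladd.
Proof. by move=> x; apply: LS_ext => k /=; rewrite /sadd /szero add0r. Qed.
Lemma laddN : left_inverse lzero lopp ladd.
Proof. by move=> x; apply: LS_ext => k /=; rewrite /sadd /sopp /szero addNr. Qed.

HB.instance Definition _ := GRing.isZmodule.Build LS laddA laddC ladd0 laddN.

Lemma tr_add a b t N : tr (sadd a b) t N = tr a t N + tr b t N.
Proof. by apply/polyP => j; rewrite coefD !coef_poly; case: ifP; rewrite ?addr0. Qed.

Lemma coefM_eqNl (p p' q : {poly rat}) (N n : nat) :
  (forall j, (j < N)%N -> p`_j = p'`_j) -> (n < N)%N -> (p * q)`_n = (p' * q)`_n.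
Proof. by move=> h lt; rewrite mulrC (mulrC p'); apply: (coefM_eqN _ h lt). Qed.

Lemma lmulC : commutative lmul.
Proof.
move=> x y; apply: LS_ext => k /=.
case: (ubP x) => tx hx; case: (ubP y) => ty hy.
case: (int_split (tx + ty) k) => [lt|[n ->]].
  by rewrite (smul_ub hx hy) ?(smul_ub hy hx) //; lia.
rewrite (smul_poly (N := n.+1) hx hy) //.
have -> : tx + ty - n%:Z = ty + tx - n%:Z by ring.
by rewrite (smul_poly (N := n.+1) hy hx) // mulrC.
Qed.

Lemma lmulA : associative lmul.
Proof.
move=> x y z; apply: LS_ext => k /=.
case: (ubP x) => tx hx; case: (ubP y) => ty hy; case: (ubP z) => tz hz.
have hyz := smul_ub hy hz; have hxy := smul_ub hx hy.
case: (int_split (tx + ty + tz) k) => [lt|[n ->]].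
  rewrite (smul_ub hx hyz) ?(smul_ub hxy hz) //; lia.
have -> : tx + ty + tz - n%:Z = tx + (ty + tz) - n%:Z by ring.
rewrite (smul_poly (N := n.+1) hx hyz) //.
have -> : tx + (ty + tz) - n%:Z = (tx + ty) + tz - n%:Z by ring.
rewrite (smul_poly (N := n.+1) hxy hz) //.
rewrite (coefM_eqN (q' := tr (sv y) ty n.+1 * tr (sv z) tz n.+1) _ (tr_smul hy hz)) //.
rewrite (coefM_eqNl (p' := tr (sv x) tx n.+1 * tr (sv y) ty n.+1) _ (tr_smul hx hy)) //.
by rewrite mulrA.
Qed.

Lemma lmulDl : left_distributive lmul ladd.
Proof.
move=> x y z; apply: LS_ext => k /=.
case: (ubP x) => tx0 hx0; case: (ubP y) => ty0 hy0; case: (ubP z) => tz hz.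
case: (ub_max hx0 hy0) => hx hy; set t := Num.max _ _ in hx hy.
have hxy := ub_add hx hy.
rewrite /sadd.
case: (int_split (t + tz) k) => [lt|[n ->]].
  rewrite (smul_ub hxy hz) ?(smul_ub hx hz) ?(smul_ub hy hz) ?addr0 //; lia.
rewrite !(smul_poly (N := n.+1) _ hz) // tr_add mulrDl coefD //.
Qed.

Lemma tr_one N : (0 < N)%N -> tr (poly2s 1) 0 N = 1.
Proof.
move=> hN; apply/polyP => j; rewrite coef_poly coefC /poly2s.
case: j => [|j]; first by rewrite hN /= coefC.
by case: ifP => // _; rewrite ifF //; lia.
Qed.

Lemma lmul1 : left_id lone lmul.
Proof.
move=> x; apply: LS_ext => k /=.
case: (ubP x) => tx hx.
idtac.
have h0 : ub (poly2s 1) 0.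
  move=> j lt; rewrite /poly2s; case: ifP => // _; rewrite coefC ifF //; lia.
case: (int_split (0 + tx) k) => [lt|[n ->]].
  rewrite (smul_ub h0 hx) ?hx //; lia.
rewrite (smul_poly (N := n.+1) h0 hx) // tr_one // mul1r coef_poly ltnSn.
by congr (sv x _); ring.
Qed.

Lemma lone_neq0 : lone != 0.
Proof.
apply/eqP => /(congr1 (fun x => sv x 0)) /=.
by rewrite /poly2s /= coefC /= /szero => /eqP; rewrite oner_eq0.
Qed.

HB.instance Definition _ := GRing.Zmodule_isComNzRing.Build LS lmulA lmulC lmul1 lmulDl lone_neq0.


Lemma svD (x y : LS) k : sv (x + y) k = sv x k + sv y k. Proof. by []. Qed.
Lemma svN (x : LS) k : sv (- x) k = - sv x k. Proof. by []. Qed.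
Lemma svB (x y : LS) k : sv (x - y) k = sv x k - sv y k. Proof. by []. Qed.
Lemma sv0 k : sv (0 : LS) k = 0. Proof. by []. Qed.
Lemma svM (x y : LS) : sv (x * y) = smul (sv x) (sv y). Proof. by []. Qed.
Lemma sv1 : sv (1 : LS) = poly2s 1. Proof. by []. Qed.

Lemma LS0P (x : LS) : x = 0 <-> forall k, sv x k = 0.
Proof. by split=> [-> //|h]; apply: LS_ext => k; rewrite h. Qed.

Lemma top_uniq c d d' : is_top c d -> is_top c d' -> d = d'.
Proof.
move=> [h1 h2] [h1' h2']; case: (ltgtP d d') => // lt.
  by move: h1'; rewrite h2 ?eqxx.
by move: h1; rewrite h2' ?eqxx.
Qed.

Lemma deg_top c d : is_top c d -> deg c = d%:E.
Proof.
move=> h; rewrite /deg; case: excluded_middle_informative => [H|[]]; last by exists d.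
case: (constructive_indefinite_description _ H) => d' h' /=.
by rewrite (top_uniq h' h).
Qed.

Lemma ltop_top c d : is_top c d -> ltop c = d.
Proof.
move=> h; rewrite /ltop; case: excluded_middle_informative => [H|[]]; last by exists d.
case: (constructive_indefinite_description _ H) => d' h' /=.
by rewrite (top_uniq h' h).
Qed.

Lemma deg_notop c : ~ (exists d, is_top c d) -> deg c = -oo%E.
Proof. by move=> h; rewrite /deg; case: excluded_middle_informative. Qed.

Lemma top_exists c t k0 : ub c t -> c k0 != 0 -> exists d, is_top c d.
Proof.
move=> hub ck.
have hk : k0 <= t by case: (leP k0 t) => // lt; rewrite hub ?eqxx in ck.
have [n len] : exists n : nat, (absz (t - k0)%R <= n)%N by exists (absz (t - k0)%R).
elim: n k0 len hk ck => [|n IH] k0 len hk ck.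
  exists k0; split => // k lt; apply: hub; lia.
case: (pselect (exists k, k0 < k /\ c k != 0)) => [[k [lt ck']]|nex].
  have hk' : k <= t by case: (leP k t) => // lt'; rewrite hub ?eqxx in ck'.
  apply: (IH k) => //; lia.
exists k0; split => // k lt; apply/eqP; apply: contraT => nz; exfalso; apply: nex; by exists k.
Qed.

Lemma LS_top (x : LS) : x != 0 -> exists d, is_top (sv x) d.
Proof.
move=> nz; case: (ubP x) => t ht.
have [k ck] : exists k, sv x k != 0.
  apply: contra_notP (negP nz) => h; apply/eqP/LS0P => k.
  by apply/eqP; apply: contraT => ck; case: h; exists k.
exact: top_exists ht ck.
Qed.

Lemma deg_LS0 : deg (sv 0) = -oo%E.
Proof. by apply: deg_notop => -[d [h _]]; rewrite sv0 eqxx in h. Qed.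

Lemma size_inv_coefs a m : size (inv_coefs a m) = m.+1.
Proof. by elim: m => //= m IH; rewrite size_rcons IH. Qed.

Definition Bc a i := nth 0 (inv_coefs a i) i.

Lemma inv_coefs_prefix a m i : (i <= m)%N -> nth 0 (inv_coefs a m) i = Bc a i.
Proof.
elim: m => [|m IH]; first by rewrite leqn0 => /eqP ->.
rewrite leq_eqVlt => /orP [/eqP -> //|lt].
by rewrite /= nth_rcons size_inv_coefs lt IH.
Qed.

Lemma Bc_rec a m : Bc a m.+1 =
  - (a 0%N)^-1 * \sum_(j < m.+1) a j.+1 * Bc a (m - j)%N.
Proof.
rewrite /Bc /= nth_rcons size_inv_coefs ltnn eqxx; congr (_ * _).
rewrite big_add1 /= big_mkord; apply: eq_bigr => j _.
rewrite inv_coefs_prefix; last by have := ltn_ord j; lia.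
by congr (_ * Bc _ _); lia.
Qed.

Lemma conv_Bc a n : a 0%N != 0 ->
  \sum_(j < n.+1) a j * Bc a (n - j)%N = (n == 0%N)%:R.
Proof.
move=> a0; case: n => [|m]; first by rewrite big_ord1 /Bc /= mulfV.
rewrite big_ord_recl subn0 Bc_rec /=.
rewrite mulrA mulrN mulfV // mulN1r.
under [X in _ + X = _]eq_bigr => j _ do rewrite /bump /= add1n subSS.
by rewrite addNr.
Qed.

Lemma Bc0 m : Bc (fun _ => 0) m = 0.
Proof.
elim: m {-2}m (leqnn m) => [|m IH] i lei.
  by move: lei; rewrite leqn0 => /eqP ->; rewrite /Bc /= invr0.
by case: i lei => [|i] lei; [rewrite /Bc /= invr0|rewrite Bc_rec invr0 oppr0 mul0r].
Qed.

Lemma sinv_ub c : ub (sinv c) (- ltop c).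
Proof. by move=> k lt; rewrite /sinv ifF //; lia. Qed.

Lemma laurent_inv (x : LS) : laurent (sinv (sv x)).
Proof. exact: ub_laurent (@sinv_ub _). Qed.
Definition linv (x : LS) := MkLS (laurent_inv x).

Lemma sinv_coef c d (j : nat) : is_top c d ->
  sinv c (- d - j%:Z) = Bc (fun i => c (d - i%:Z)) j.
Proof.
move=> h; rewrite /sinv (ltop_top h) ifT; last by lia.
by rewrite /Bc; have -> : absz (- d - (- d - j%:Z))%R = j by lia.
Qed.

Lemma poly2s1 k : poly2s 1 k = (k == 0)%:R.
Proof.
rewrite /poly2s coefC; case: (leP 0 k) => h.
  have -> : (absz k == 0%N) = (k == 0) by apply/eqP/eqP; lia.
  by case: (k == 0).
by have -> : (k == 0) = false by apply/negbTE/eqP; lia.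
Qed.

Lemma lmulV (x : LS) : x != 0 -> linv x * x = 1.
Proof.
move=> nz; rewrite mulrC; case: (LS_top nz) => d hd.
apply: LS_ext => k; rewrite svM sv1 /=.
have hx : ub (sv x) d by case: hd.
have hi : ub (sinv (sv x)) (-d) by rewrite -(ltop_top hd); exact: sinv_ub.
case: (int_split (d + - d) k) => [lt|[n ->]].
  rewrite (smul_ub hx hi) // poly2s1.
  by have -> : (k == 0) = false by apply/negbTE/eqP; lia.
rewrite (smul_poly (N := n.+1) hx hi) // coefM poly2s1.
have -> : (d + - d - n%:Z == 0) = (n == 0%N) by apply/eqP/eqP; lia.
rewrite -(conv_Bc (a := fun i : nat => sv x (d - i%:Z))); last by case: hd; rewrite subr0.
apply: eq_bigr => j _; rewrite !coef_poly.
have hj := ltn_ord j.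
rewrite ifT; last by lia.
rewrite ifT; last by lia.
congr (_ * _); rewrite -sinv_coef //; congr sinv; lia.
Qed.

Lemma linv0 : linv 0 = 0.
Proof.
apply: LS_ext => k; rewrite /= /sinv.
case: ifP => // _; exact: Bc0.
Qed.

HB.instance Definition _ := GRing.ComNzRing_isField.Build LS lmulV linv0.

Lemma svV (x : LS) : sv (x^-1) = sinv (sv x). Proof. by []. Qed.


Definition top (x : LS) d := is_top (sv x) d.
Definition ubL (x : LS) t := ub (sv x) t.

Lemma top_ub x d : top x d -> ubL x d.
Proof. by case. Qed.

Lemma top_neq0 x d : top x d -> x != 0.
Proof. by case=> h _; apply: contra h => /eqP ->. Qed.

Lemma top_mul x y dx dy : top x dx -> top y dy -> top (x * y) (dx + dy).
Proof.
move=> hx hy; have ux := top_ub hx; have uy := top_ub hy.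
split; last exact: smul_ub.
have -> : dx + dy = dx + dy - (0%N)%:Z by ring.
rewrite svM (smul_poly (N := 1) ux uy) // coefM big_ord1 !coef_poly /= subr0.
rewrite subn0 subr0 mulf_neq0 //; [by case: hx | by case: hy].
Qed.

Lemma top_inv x d : top x d -> top x^-1 (- d).
Proof.
move=> h; split; last by rewrite svV -(ltop_top h); exact: sinv_ub.
have -> : - d = - d - (0%N)%:Z by ring.
by rewrite svV sinv_coef // /Bc /= subr0 invr_eq0; case: h.
Qed.

Lemma top_add x y d e : top x d -> ubL y e -> e < d -> top (x + y) d.
Proof.
move=> [h1 h2] hy lt; split.
  by rewrite svD (hy d lt) addr0.
by move=> k lt'; rewrite svD h2 // hy ?addr0 //; apply: lt_trans lt'.
Qed.

Lemma top_opp x d : top x d -> top (- x) d.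
Proof. by move=> [h1 h2]; split; [rewrite svN oppr_eq0|move=> k lt; rewrite svN h2 ?oppr0]. Qed.

Lemma ubL_mul x y s t : ubL x s -> ubL y t -> ubL (x * y) (s + t).
Proof. exact: smul_ub. Qed.

Lemma ubL_add x y t : ubL x t -> ubL y t -> ubL (x + y) t.
Proof. exact: ub_add. Qed.

Lemma ubL_opp x t : ubL x t -> ubL (- x) t.
Proof. exact: ub_opp. Qed.

Lemma ubL_le x t t' : ubL x t -> t <= t' -> ubL x t'.
Proof. exact: ub_le. Qed.

Lemma ubL_sub x y t : ubL x t -> ubL y t -> ubL (x - y) t.
Proof. by move=> h1 h2; apply: ubL_add h1 (ubL_opp h2). Qed.

Lemma ubL0 t : ubL 0 t. Proof. by []. Qed.

Lemma ubL_all0 x : (forall t, ubL x t) -> x = 0.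
Proof. by move=> h; apply/LS0P => k; apply: (h (k - 1)); lia. Qed.

Lemma top_ex x : x != 0 -> exists d, top x d.
Proof. exact: LS_top. Qed.

Lemma poly2s_ub' p : ub (poly2s p) ((size p)%:Z - 1).
Proof.
move=> k lt; rewrite /poly2s; case: ifP => // hk.
by rewrite nth_default //; move: lt; set s := size p; lia.
Qed.

Lemma top_P2 p : p != 0 -> top (P2 p) ((size p)%:Z - 1).
Proof.
move=> nz; split; last exact: poly2s_ub'.
have hs : (0 < size p)%N by rewrite size_poly_gt0.
rewrite /= /poly2s.
move: hs; set s := size p => hs.
rewrite ifT; last by lia.
have -> : absz (s%:Z - 1)%R = s.-1 by lia.
by rewrite -lead_coefE lead_coef_eq0.
Qed.

Lemma P2D p q : P2 (p + q) = P2 p + P2 q.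
Proof. by apply: LS_ext => k; rewrite svD /= /poly2s coefD; case: ifP; rewrite ?addr0. Qed.

Lemma P2N p : P2 (- p) = - P2 p.
Proof. by apply: LS_ext => k; rewrite svN /= /poly2s coefN; case: ifP; rewrite ?oppr0. Qed.

Lemma P20 : P2 0 = 0.
Proof. by apply: LS_ext => k; rewrite /= /poly2s coef0; case: ifP. Qed.

Lemma P21 : P2 1 = 1.
Proof. by []. Qed.

Lemma P2B p q : P2 (p - q) = P2 p - P2 q.
Proof. by rewrite P2D P2N. Qed.

Lemma P2_inj p : P2 p = 0 -> p = 0.
Proof.
move=> /LS0P h; apply/polyP => j; rewrite coef0.
by have := h j%:Z; rewrite /= /poly2s.
Qed.

Lemma mulP2C x c k : sv (x * P2 c%:P) k = sv x k * c.
Proof.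
case: (ubP x) => tx hx.
have h0 : ub (poly2s c%:P) 0.
  move=> j lt; rewrite /poly2s; case: ifP => // _; rewrite coefC ifF //; lia.
rewrite svM.
case: (int_split (tx + 0) k) => [lt|[n ->]].
  by rewrite (smul_ub hx h0) // hx ?mul0r //; lia.
rewrite (smul_poly (N := n.+1) hx h0) //.
have -> : tr (poly2s c%:P) 0 n.+1 = c%:P.
  apply/polyP => j; rewrite coef_poly coefC /poly2s.
  case: j => [|j] /=; first by rewrite coefC.
  by case: ifP => // _; rewrite ifF //; lia.
by rewrite coefMC coef_poly ltnSn addr0.
Qed.

Lemma mulP2X x k : sv (x * P2 'X) k = sv x (k - 1).
Proof.
case: (ubP x) => tx hx.
have h1 : ub (poly2s 'X) 1.
  move=> j lt; rewrite /poly2s; case: ifP => // _; rewrite coefX.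
  by have -> : (absz j == 1%N) = false by apply/negbTE/eqP; lia.
rewrite svM.
case: (int_split (tx + 1) k) => [lt|[n ->]].
  by rewrite (smul_ub hx h1) // hx //; lia.
rewrite (smul_poly (N := n.+1) hx h1) //.
have -> : tr (poly2s 'X) 1 n.+1 = 1.
  apply/polyP => j; rewrite coef_poly coefC /poly2s.
  case: j => [|j] /=; first by rewrite coefX.
  case: ifP => // h; case: ifP => // h'.
  by rewrite coefX; have -> : (absz (1 - j.+1%:Z)%R == 1%N) = false by apply/negbTE/eqP; lia.
by rewrite mulr1 coef_poly ltnSn; congr (sv x _); lia.
Qed.

Lemma P2CM c q : P2 (c%:P * q) = P2 c%:P * P2 q.
Proof.
apply: LS_ext => k; rewrite [P2 _ * P2 _]mulrC mulP2C /= /poly2s coefCM.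
by case: ifP; rewrite ?mul0r // mulrC.
Qed.

Lemma P2XM q : P2 ('X * q) = P2 'X * P2 q.
Proof.
apply: LS_ext => k; rewrite [P2 _ * P2 _]mulrC mulP2X /= /poly2s coefXM.
case: (ltP k 1) => h.
  have -> : (0 <= k - 1) = false by apply/negbTE; lia.
  case: ifP => // h0.
  by have -> : (absz k == 0%N) = true by apply/eqP; lia.
have -> : (0 <= k - 1) = true by lia.
have -> : (0 <= k) = true by lia.
have -> : (absz k == 0%N) = false by apply/negbTE/eqP; lia.
by congr (q`_ _); lia.
Qed.

Lemma P2M p q : P2 (p * q) = P2 p * P2 q.
Proof.
elim/poly_ind: p q => [|p c IH] q; first by rewrite mul0r P20 mul0r.
by rewrite mulrDl !P2D P2CM -(mulrA p) IH (IH 'X) P2XM mulrDl mulrA.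
Qed.


Fixpoint cfL (c : nat -> {poly rat}) (n : nat) : LS :=
  match n with
  | 0 => P2 (c 0%N)
  | n'.+1 => P2 (c 0%N) + (cfL (fun j => c j.+1) n')^-1
  end.

Lemma cfL_sv c n : sv (cfL c n) = cf_fin c n.
Proof. by elim: n c => //= n IH c; rewrite -IH. Qed.

Definition good (c : nat -> {poly rat}) := forall j, (0 < j)%N -> (1 < size (c j))%N.

Lemma good_shift c : good c -> good (fun j => c j.+1) /\ (1 < size (c 1%N))%N.
Proof. by move=> h; split; [move=> j _; apply: h|apply: h]. Qed.

Lemma top_P2s (p : {poly rat}) : (1 < size p)%N -> top (P2 p) ((size p)%:Z - 1).
Proof. by move=> h; apply: top_P2; rewrite -size_poly_gt0; lia. Qed.

Lemma cf_top c n : good c -> (1 < size (c 0%N))%N ->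
  top (cfL c n) ((size (c 0%N))%:Z - 1).
Proof.
elim: n c => [|n IH] c hg h0 /=; first exact: top_P2s.
case: (good_shift hg) => hg' h1.
have t1 := top_inv (IH _ hg' h1).
apply: (top_add (top_P2s h0) (top_ub t1)).
move: h0 h1; set s0 := size (c 0%N); set s1 := size (c 1%N); lia.
Qed.

Lemma ubL_P2 (p : {poly rat}) : ubL (P2 p) ((size p)%:Z - 1).
Proof. exact: poly2s_ub'. Qed.

Lemma cf_ub c n : good c ->
  ubL (cfL c n) (Num.max ((size (c 0%N))%:Z - 1) 0).
Proof.
case: n => [|n] hg /=.
  by apply: ubL_le (@ubL_P2 _) _; rewrite le_max lexx.
case: (good_shift hg) => hg' h1.
have t1 := top_inv (cf_top n hg' h1).
apply: ubL_add.
  by apply: ubL_le (@ubL_P2 _) _; rewrite le_max lexx.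
apply: ubL_le (top_ub t1) _.
move: h1; set s1 := size (c 1%N); rewrite le_max; lia.
Qed.

Lemma cf_diff c n : good c ->
  ubL (cfL c n.+1 - cfL c n) (- (n%:Z + 1)).
Proof.
elim: n c => [|n IH] c hg.
  case: (good_shift hg) => hg' h1.
  rewrite /= addrC addKr.
  apply: ubL_le (top_ub (top_inv (top_P2s h1))) _.
  move: h1; set s1 := size (c 1%N); lia.
case: (good_shift hg) => hg' h1.
set c' := fun j => c j.+1.
have e : cfL c n.+2 - cfL c n.+1 =
   (cfL c' n - cfL c' n.+1) * ((cfL c' n.+1)^-1 * (cfL c' n)^-1).
  have nz1 := top_neq0 (cf_top n.+1 hg' h1).
  have nz0 := top_neq0 (cf_top n hg' h1).
  change (cfL c n.+2) with (P2 (c 0%N) + (cfL c' n.+1)^-1).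
  change (cfL c n.+1) with (P2 (c 0%N) + (cfL c' n)^-1).
  move: nz1 nz0; rewrite -/c'; set X := cfL c' n.+1; set Y := cfL c' n => nz1 nz0.
  by field; rewrite nz1 nz0.
rewrite e.
have u1 := ubL_opp (IH c' hg').
rewrite opprB in u1.
have t1 := top_inv (cf_top n.+1 hg' h1).
have t0 := top_inv (cf_top n hg' h1).
apply: ubL_le (ubL_mul u1 (ubL_mul (top_ub t1) (top_ub t0))) _.
move: h1; set s1 := size (c' 0%N); lia.
Qed.

Lemma cf_diff2 c n m : good c -> (n <= m)%N ->
  ubL (cfL c m - cfL c n) (- (n%:Z + 1)).
Proof.
move=> hg; elim: m => [|m IH].
  by rewrite leqn0 => /eqP ->; rewrite subrr.
rewrite leq_eqVlt => /orP [/eqP ->|lt]; first by rewrite subrr.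
have -> : cfL c m.+1 - cfL c n = (cfL c m.+1 - cfL c m) + (cfL c m - cfL c n) by ring.
apply: ubL_add; last exact: IH.
apply: ubL_le (@cf_diff c m hg) _; lia.
Qed.

Definition cfx c : series := fun k => sv (cfL c (absz k)) k.

Lemma cfx_stab c n k : good c -> (absz k <= n)%N -> sv (cfL c n) k = cfx c k.
Proof.
move=> hg le; rewrite /cfx.
have h := cf_diff2 hg le; have := h k; rewrite svB => {}h.
by apply/eqP; rewrite -subr_eq0 h //; lia.
Qed.

Lemma cfx_ub c : good c -> ub (cfx c) (Num.max ((size (c 0%N))%:Z - 1) 0).
Proof. by move=> hg k lt; rewrite /cfx; have h := @cf_ub c (absz k) hg; apply: h. Qed.

Lemma cf_limit c : good c -> exists x : LS,
  forall n, ubL (x - cfL c n) (- (n%:Z + 1)).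
Proof.
move=> hg; exists (MkLS (ub_laurent (cfx_ub hg))) => n k lt.
rewrite svB /=.
rewrite -(cfx_stab (n := maxn n (absz k)) hg); last by rewrite leq_maxr.
have h := cf_diff2 hg (leq_maxl n (absz k)); have := h k; rewrite svB => {}h.
by rewrite h.
Qed.

Lemma ub_deg_lt c (N : int) : ub c (N - 1) -> (deg c < N%:E)%E.
Proof.
move=> h; case: (pselect (exists d, is_top c d)) => [[d hd]|nt].
  rewrite (deg_top hd) lte_fin.
  case: (ltP d N) => // le; case: hd => hd _; by rewrite h ?eqxx in hd; lia.
by rewrite (deg_notop nt) ltNye.
Qed.

Lemma deg_lt_ub c (N : int) : laurent c -> (deg c < N%:E)%E -> ub c (N - 1).
Proof.
move=> [t ht] hd; case: (pselect (exists d, is_top c d)) => [[d td]|nt].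
  rewrite (deg_top td) lte_fin in hd.
  by apply: ub_le (proj2 td) _; lia.
move=> k _; apply/eqP; apply: contraT => nz; case: nt; exact: top_exists ht nz.
Qed.

Lemma cf_value_ex c : good c -> exists x : LS, cf_value c (sv x).
Proof.
move=> hg; case: (cf_limit hg) => x hx; exists x; split; first exact: svP.
move=> N; exists (absz N) => n le.
rewrite -cfL_sv; apply: ub_deg_lt.
by apply: ub_le (hx n) _; lia.
Qed.

Lemma cf_value_close c (x : LS) : cf_value c (sv x) ->
  forall N, exists n, ubL (x - cfL c n) (N - 1).
Proof.
move=> [_ h] N; case: (h N) => n0 hn; exists n0.
apply: deg_lt_ub; first exact: svP.
by have := hn n0 (leqnn _); rewrite -cfL_sv.
Qed.

Lemma cf_value_top c (x : LS) : good c -> (1 < size (c 0%N))%N ->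
  cf_value c (sv x) -> top x ((size (c 0%N))%:Z - 1).
Proof.
move=> hg h0 hc; case: (cf_value_close hc 0) => n hn.
have -> : x = cfL c n + (x - cfL c n) by ring.
apply: top_add (cf_top n hg h0) hn _.
move: h0; set s0 := size (c 0%N); lia.
Qed.

Lemma cf_value_ub0 c (x : LS) : good c -> c 0%N = 0 ->
  cf_value c (sv x) -> ubL x (-1).
Proof.
move=> hg h0 hc; case: (cf_value_close hc 0) => n hn.
have -> : x = cfL c n + (x - cfL c n) by ring.
apply: ubL_add; last exact: hn.
case: n {hn} => [|n] /=; first by rewrite h0 P20.
case: (good_shift hg) => hg' h1.
rewrite h0 P20 add0r.
apply: ubL_le (top_ub (top_inv (cf_top n hg' h1))) _.
move: h1; set s1 := size (c 1%N); lia.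
Qed.


Definition Q0 (n : nat) (X Y : {poly rat}) := X * X - 'X^n * X * Y - Y * Y.

Lemma Q0_reduce n X Y : Q0 n X Y = 0 -> X != 0 -> Y != 0 -> (size Y < size X)%N ->
  let Z := X - 'X^n * Y in [/\ Q0 n Y Z = 0, Z != 0 & (size Z < size Y)%N].
Proof.
move=> hq nX nY lt Z.
have e : X * Z = Y * Y.
  by apply/eqP; rewrite -subr_eq0; rewrite /Z -hq /Q0; apply/eqP; ring.
have nZ : Z != 0 by apply: contraNneq nY => z0; move: e; rewrite z0 mulr0 => /esym/eqP; rewrite mulf_eq0 orbb.
split => //.
  by rewrite /Q0 -e /Z; ring.
have := congr1 (fun p : {poly rat} => size p) e; rewrite /=; rewrite !size_mul //.
have p1 : (0 < size Z)%N by rewrite size_poly_gt0.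
have p2 : (0 < size Y)%N by rewrite size_poly_gt0.
move: lt p1 p2; set sx := size X; set sy := size Y; set sz := size Z; lia.
Qed.

Lemma Q0_neq_size n X Y : (0 < n)%N -> Q0 n X Y = 0 -> X != 0 -> Y != 0 -> size X != size Y.
Proof.
move=> hn hq nX nY; apply/eqP => es.
set Z := X - 'X^n * Y.
have e : X * Z = Y * Y.
  by apply/eqP; rewrite -subr_eq0; rewrite /Z -hq /Q0; apply/eqP; ring.

have sXY : size ('X^n * Y) = (n + size Y)%N.
  have x0 : ('X^n : {poly rat}) != 0 by exact: monic_neq0 (monicXn _ n).
  rewrite size_mul // size_polyXn; have : (0 < size Y)%N by rewrite size_poly_gt0. set sy := size Y; lia.
have sZ : size Z = (n + size Y)%N.
  rewrite /Z addrC size_addl size_opp sXY //.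
  by rewrite es; move: hn; set sy := size Y; lia.
have nZ : Z != 0 by rewrite -size_poly_gt0 sZ; lia.
have p2 : (0 < size Y)%N by rewrite size_poly_gt0.
have := congr1 (fun p : {poly rat} => size p) e; rewrite /=; rewrite !size_mul // sZ es.
move: hn p2; set sy := size Y; lia.
Qed.

Lemma Q0_swap n X Y : Q0 n (- Y) X = - Q0 n X Y.
Proof. by rewrite /Q0; ring. Qed.

Lemma Q0_aniso n X Y : (0 < n)%N -> Q0 n X Y = 0 -> X = 0 /\ Y = 0.
Proof.
move=> hn.
have [m hm] : exists m, (size X + size Y <= m)%N by exists (size X + size Y)%N.
elim: m X Y hm => [|m IH] X Y hm hq.
  by move: hm; rewrite leqn0 addn_eq0 !size_poly_eq0 => /andP [/eqP -> /eqP ->].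
case: (eqVneq Y 0) => [y0|nY].
  have hxx : X * X = Q0 n X Y by rewrite /Q0 y0; ring.
  by move: hxx; rewrite hq => /eqP; rewrite mulf_eq0 orbb => /eqP.
case: (eqVneq X 0) => [x0|nX].
  have hyy : Y * Y = - Q0 n X Y by rewrite /Q0 x0; ring.
  by move: hyy; rewrite hq oppr0 => /eqP; rewrite mulf_eq0 orbb => /eqP.
have hne := Q0_neq_size hn hq nX nY.
case: (ltngtP (size Y) (size X)) => [lt|lt|eq]; last by rewrite eq eqxx in hne.
  have [hq' nZ lt'] := Q0_reduce hq nX nY lt.
  have := IH _ _ _ hq'; case.
    by move: hm lt'; set sx := size X; set sy := size Y; set sz := size (X - _); lia.
  by move=> e _; rewrite e eqxx in nY.
have hq2 : Q0 n (- Y) X = 0 by rewrite Q0_swap hq oppr0.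
have nY' : - Y != 0 by rewrite oppr_eq0.
have lt2 : (size X < size (- Y))%N by rewrite size_opp.
have [hq' nZ lt'] := Q0_reduce hq2 nY' nX lt2.
have := IH _ _ _ hq'; case.
  by move: hm lt'; set sx := size X; set sy := size Y; set sz := size (- Y - _); lia.
by move=> e _; rewrite e eqxx in nX.
Qed.


Lemma size_Xn n : size ('X^n : {poly rat}) = n.+1.
Proof. exact: size_polyXn. Qed.

Lemma good_const n : (0 < n)%N -> good (fun _ => 'X^n).
Proof. by move=> hn j _; rewrite size_Xn. Qed.

Lemma alpha_ex n : (0 < n)%N -> exists a : LS,
  top a n%:Z /\ a * a = P2 'X^n * a + 1.
Proof.
move=> hn; set c := fun _ : nat => ('X^n : {poly rat}).
have hg := good_const hn.
have h0 : (1 < size (c 0%N))%N by rewrite /c size_Xn.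
have tc : forall m, top (cfL c m) n%:Z.
  by move=> m; have := cf_top m hg h0; rewrite /c size_Xn; congr top; lia.
case: (cf_limit hg) => a ha.
have ta : top a n%:Z.
  have -> : a = cfL c 0 + (a - cfL c 0) by ring.
  by apply: top_add (tc 0%N) (ha 0%N) _; lia.
have na := top_neq0 ta.
have hfix : a = P2 'X^n + a^-1.
  apply/eqP; rewrite -subr_eq0; apply/eqP; apply: ubL_all0 => t.
  set m := absz t.
  have e : a - (P2 'X^n + a^-1) =
      (a - cfL c m.+1) + (a - cfL c m) * ((cfL c m)^-1 * a^-1).
    have nm := top_neq0 (tc m).
    change (cfL c m.+1) with (P2 'X^n + (cfL c m)^-1).
    move: nm; set F := cfL c m => nm.
    by field; rewrite nm na.
  rewrite e; apply: ubL_add.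
    by apply: ubL_le (ha m.+1) _; lia.
  apply: ubL_le (ubL_mul (ha m) (ubL_mul (top_ub (top_inv (tc m))) (top_ub (top_inv ta)))) _.
  lia.
exists a; split => //.
by rewrite {1}hfix mulrDl mulVf.
Qed.

Lemma alpha_irr n (a : LS) : (0 < n)%N -> a * a = P2 'X^n * a + 1 -> ~ in_QT (sv a).
Proof.
move=> hn ha [p [q [nq e]]].
have e' : P2 q * a = P2 p by apply: LS_ext => k; rewrite svM e.
have : P2 (Q0 n p q) = 0.
  rewrite /Q0 !P2B !P2M -e'.
  have -> : P2 q * a * (P2 q * a) - P2 'X^n * (P2 q * a) * P2 q - P2 q * P2 q =
            P2 q * P2 q * (a * a - P2 'X^n * a - 1) by ring.
  by rewrite ha; ring.
move/P2_inj/(Q0_aniso hn) => [_ q0].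
by rewrite q0 eqxx in nq.
Qed.

Lemma mulP2Xn x (i : nat) k : sv (x * P2 'X^i) k = sv x (k - i%:Z).
Proof.
elim: i k => [|i IH] k; first by rewrite expr0 P21 mulr1 subr0.
rewrite exprSr P2M mulrA mulP2X IH; congr (sv x _); lia.
Qed.

Lemma P2_sum I (r : seq I) (P : pred I) (F : I -> {poly rat}) :
  P2 (\sum_(i <- r | P i) F i) = \sum_(i <- r | P i) P2 (F i).
Proof. exact: (big_morph P2 P2D P20). Qed.

Lemma sv_sum I (r : seq I) (P : pred I) (F : I -> LS) k :
  sv (\sum_(i <- r | P i) F i) k = \sum_(i <- r | P i) sv (F i) k.
Proof. exact: (big_morph (fun x => sv x k) (fun x y => svD x y k) (sv0 k)). Qed.

Lemma mul_P2_coef (u : LS) (Y : {poly rat}) (N : nat) k : (size Y <= N.+1)%N ->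
  sv (u * P2 Y) k = \sum_(i < N.+1) Y`_i * sv u (k - i%:Z).
Proof.
move=> hs.
have eY : Y = \sum_(i < N.+1) (Y`_i)%:P * 'X^i.
  apply/polyP => j; rewrite coef_sum.
  under eq_bigr => i _ do rewrite coefCM coefXn.
  case: (ltnP j N.+1) => hj.
    rewrite (bigD1 (Ordinal hj)) //= eqxx mulr1 big1 ?addr0 // => i ne.
    rewrite (_ : (j == i :> nat) = false) ?mulr0 //; apply/negbTE.
    by apply: contra ne => /eqP e; apply/eqP; apply: val_inj; rewrite /= e.
  rewrite nth_default; last by apply: (leq_trans hs hj).
  rewrite big1 // => i _; rewrite (_ : (j == i) = false) ?mulr0 //.
  by apply/negbTE; have := ltn_ord i; lia.
rewrite [in LHS]eY P2_sum mulr_sumr sv_sum; apply: eq_bigr => i _.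
by rewrite P2M (mulrC (P2 _%:P)) mulrA mulP2C mulP2Xn mulrC.
Qed.

Lemma dirichlet (u : LS) (N : nat) : exists X Y : {poly rat},
  [/\ Y != 0, (size Y <= N.+1)%N & ubL (P2 X + u * P2 Y) (- (N%:Z + 1))].
Proof.
pose M : 'M[rat]_(N.+1, N) := \matrix_(i, r) sv u (- ((r : nat)%:Z + 1) - (i : nat)%:Z).
have hker : kermx M != 0.
  rewrite -mxrank_eq0 mxrank_ker; have := rank_leq_col M; lia.
have [i0 hi0] : exists i, row i (kermx M) != 0.
  case: (pselect (exists i, row i (kermx M) != 0)) => // H; exfalso.
  move/negP: hker; apply; apply/eqP/row_matrixP => i; rewrite row0.
  apply/eqP; apply: contraT => h; case: H; by exists i.
set y := row i0 (kermx M).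
have hy : y *m M = 0 by rewrite /y -row_mul mulmx_ker row0.
pose Y : {poly rat} := \poly_(i < N.+1) y 0 (inord i).
have sY : (size Y <= N.+1)%N by apply: size_poly.
have nY : Y != 0.
  apply/negP => /eqP Y0; move/negP: hi0; apply; apply/eqP/rowP => j; rewrite mxE.
  have := congr1 (fun p : {poly rat} => p`_j) Y0; rewrite /= coef_poly ltn_ord coef0 inord_val /y mxE => ->; by rewrite mxE.
have hzero : forall r : nat, (r < N)%N -> sv (u * P2 Y) (- (r%:Z + 1)) = 0.
  move=> r hr; rewrite (mul_P2_coef _ _ sY).
  transitivity ((y *m M) 0 (Ordinal hr)); last by rewrite hy mxE.
  rewrite !mxE; apply: eq_bigr => i _; by rewrite coef_poly ltn_ord inord_val /M !mxE.
case: (ubP (u * P2 Y)) => t ht.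
pose K := (absz t).+1.
exists (- \poly_(k < K) sv (u * P2 Y) k%:Z), Y; split => //.
move=> k lt; rewrite svD /= /poly2s coefN coef_poly.
case: (leP 0 k) => hk.
  case: (ltnP (absz k) K) => hK.
    by rewrite (_ : (absz k)%:Z = k) ?addNr //; lia.
  by rewrite oppr0 add0r; apply: ht; lia.
rewrite add0r.
have hr : (absz (- k - 1)%R < N)%N by lia.
rewrite (_ : k = - ((absz (- k - 1)%R)%:Z + 1)); [exact: hzero | lia].
Qed.


Lemma sv_natmul (z : LS) n k : sv (n%:R * z) k = n%:R * sv z k.
Proof.
elim: n => [|n IH]; first by rewrite !mul0r.
by rewrite -addn1 !natrD !mulrDl svD IH !mul1r.
Qed.

Lemma disc_sv a b c : disc (sv a) (sv b) (sv c) = sv (b * b - 4%:R * (a * c)).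
Proof.
apply: functional_extensionality => k.
by rewrite /disc /sadd /sopp /sscale svD svN sv_natmul.
Qed.

Lemma qf_sv a b c X Y : qf_eval (sv a) (sv b) (sv c) X Y =
  sv (a * P2 X * P2 X + b * P2 X * P2 Y + c * P2 Y * P2 Y).
Proof.
transitivity (sv (a * P2 (X * X) + (b * P2 (X * Y) + c * P2 (Y * Y)))); first by [].
by rewrite !P2M; congr sv; ring.
Qed.

Lemma ub_deg_le c t : ub c t -> (deg c <= t%:E)%E.
Proof.
move=> h; case: (pselect (exists d, is_top c d)) => [[d hd]|nt].
  rewrite (deg_top hd) lee_fin.
  case: (leP d t) => // lt; case: hd => hd _; by rewrite h ?eqxx in hd.
by rewrite (deg_notop nt) leNye.
Qed.

Lemma szero_LS (x : LS) : sv x = szero -> x = 0.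
Proof. by move=> h; apply/LS0P => k; rewrite h. Qed.

Lemma top_deg (x : LS) d : top x d -> deg (sv x) = d%:E.
Proof. exact: deg_top. Qed.

Lemma two_neq0 : (2%:R : LS) != 0.
Proof.
apply/eqP => h; have h0 : sv (2%:R * 1) 0 = sv (0 * 1) 0 by rewrite h.
move: h0; rewrite sv_natmul mul0r sv0 sv1 poly2s1 eqxx mulr1 => /eqP.
by rewrite pnatr_eq0.
Qed.

Lemma ubL_nat n : ubL (n%:R : LS) 0.
Proof.
move=> k lt; have := sv_natmul 1 n k; rewrite mulr1 => ->; rewrite sv1 poly2s1.
by rewrite (_ : (k == 0) = false) ?mulr0 //; apply/negbTE/eqP; lia.
Qed.

Definition gseq (g : int -> {poly rat}) := forall i, (1 < size (g i))%N.

Lemma good_x g i : gseq g -> good (fun j : nat => g (i + j%:Z)).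
Proof. by move=> h j _; apply: h. Qed.

Lemma good_y g i : gseq g -> good (fun j : nat => if j == 0%N then 0 else g (i - j%:Z)).
Proof. by move=> h j hj; rewrite ifF; [apply: h|lia]. Qed.

Lemma lambda_deg g i l : gseq g -> is_lambda g i l -> deg l = ((size (g i))%:Z - 1)%:E.
Proof.
move=> hg [x [y [hx [hy ->]]]].
set X := MkLS (proj1 hx); set Y := MkLS (proj1 hy).
have tX : top X ((size (g i))%:Z - 1).
  have := @cf_value_top _ X (good_x i hg) (hg (i + 0%:Z)) hx.
  by rewrite addr0.
have uY : ubL Y (-1) := @cf_value_ub0 _ Y (good_y i hg) (erefl _) hy.
have tXY := top_add tX uY.
have := top_deg (tXY _); apply.
by move: (hg i); set s := size (g i); lia.
Qed.

Lemma lambda_ex g i : gseq g -> exists l, is_lambda g i l.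
Proof.
move=> hg.
case: (cf_value_ex (good_x i hg)) => x hx.
case: (cf_value_ex (good_y i hg)) => y hy.
by exists (sadd (sv x) (sv y)), (sv x), (sv y).
Qed.

Lemma four_neq0 : (4%:R : LS) != 0.
Proof. by rewrite (_ : 4%:R = 2%:R * 2%:R) ?mulf_neq0 ?two_neq0 // -natrM. Qed.

Lemma spectrum_m_le A B C d m : is_bqf A B C -> indefinite A B C ->
  deg (disc A B C) = (2 * d)%:E -> is_mQ A B C m -> (m <= (d - 1)%:E)%E.
Proof.
move=> [hA [hB [hC _]]] [hD [S [hS hSS]]] hdeg [hm1 _].
pose a := MkLS hA; pose b := MkLS hB; pose c := MkLS hC; pose s := MkLS hS.
change A with (sv a) in hD, hdeg, hSS, hm1.
change B with (sv b) in hD, hdeg, hSS, hm1.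
change C with (sv c) in hD, hdeg, hSS, hm1.
change S with (sv s) in hSS.
rewrite disc_sv in hD, hdeg, hSS.
set D := b * b - 4%:R * (a * c) in hD hdeg hSS.
have hsD : s * s = D by apply: LS_ext => k; rewrite svM hSS.
have nD : D != 0 by apply/eqP => D0; apply: hD; rewrite D0.
have ns : s != 0 by apply: contraNneq nD => s0; rewrite -hsD s0 mul0r.
case: (top_ex ns) => e te.
have te2 := top_mul te te; rewrite hsD in te2.
rewrite (top_deg te2) in hdeg; case: hdeg => hde.
have ed : e = d by lia.
rewrite ed in te.
case: (eqVneq a 0) => [a0|na].
  apply: le_trans (hm1 _ _) _; first (exists 1, 0; split; first by left; rewrite oner_eq0).
    by [].
  rewrite qf_sv a0 P20 !mulr0 !mul0r !addr0 deg_LS0; exact: leNye.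
case: (top_ex na) => da ta.
set u := (b - s) / (2%:R * a); set w := (b + s) / (2%:R * a).
have h2 := two_neq0; have h4 := four_neq0.
have k1 : a * (u + w) = b by rewrite /u /w; field; rewrite na h2.
have k2 : a * (u * w) = c.
  have e1 : a * (u * w) = (b * b - s * s) / (4%:R * a).
    by rewrite /u /w; field; rewrite na h2 /=; rewrite (_ : 4%:R = 2%:R * 2%:R) ?mulf_neq0 // -natrM.
  by rewrite e1 hsD /D; field; rewrite na h4.
have ident : forall x y, a * x * x + b * x * y + c * y * y = a * (x + u * y) * (x + w * y).
  move=> x y; rewrite -k1 -k2; ring.
have wu : w - u = s / a by rewrite /u /w; field; rewrite na h2.
pose N := absz (da - d)%R.
case: (dirichlet u N) => X [Y [nY sY hub]].
apply: le_trans (hm1 _ _) _.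
  exists X, Y; split; first by right.
  by [].
rewrite qf_sv ident.
set z1 := P2 X + u * P2 Y.
have ez2 : P2 X + w * P2 Y = z1 + (s / a) * P2 Y by rewrite /z1 -wu; ring.
rewrite ez2; apply: ub_deg_le.
have usa : ubL (s / a) (d + - da) := top_ub (top_mul te (top_inv ta)).
have uY : ubL (P2 Y) N%:Z.
  apply: ubL_le (@ubL_P2 Y) _; move: sY; set sy := size Y; lia.
have uz2 : ubL (z1 + s / a * P2 Y) (d - da + N%:Z).
  apply: ubL_add.
    by apply: ubL_le hub _; rewrite /N; lia.
  by apply: ubL_le (ubL_mul usa uY) _; lia.
apply: ubL_le (ubL_mul (ubL_mul (top_ub ta) hub) uz2) _.
lia.
Qed.

Lemma spectrum_val v : markov_spectrum v ->
  v = +oo%E \/ exists n : nat, (0 < n)%N /\ v = (n%:Z)%:E.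
Proof.
move=> [A [B [C [hq [hi [d [m [hd [hm ->]]]]]]]]].
have := spectrum_m_le hq hi hd hm.
case: m {hm} => [m'| |] //=; last by left.
rewrite lee_fin => le; right; exists (absz (d - m')%R); split; first lia.
by congr EFin; lia.
Qed.


Lemma top_Xn n : top (P2 'X^n) n%:Z.
Proof.
have := @top_P2 ('X^n : {poly rat}) (monic_neq0 (monicXn _ n)).
by rewrite size_Xn; congr top; lia.
Qed.

Lemma form_finite n : (0 < n)%N -> markov_spectrum (n%:Z)%:E.
Proof.
move=> hn; case: (alpha_ex hn) => a [ta ha].
pose bb := - (P2 'X^n * a); pose cc := - a.
have eD : bb * bb - 4%:R * (a * cc) = a * a * (P2 'X^n * P2 'X^n + 4%:R).
  by rewrite /bb /cc; ring.
have tE : top (P2 'X^n * P2 'X^n + 4%:R) (n%:Z + n%:Z).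
  apply: top_add (top_mul (top_Xn n) (top_Xn n)) (ubL_nat 4) _; lia.
have tD : top (bb * bb - 4%:R * (a * cc)) ((n%:Z + n%:Z) + (n%:Z + n%:Z)).
  by rewrite eD; apply: top_mul (top_mul ta ta) tE.
exists (sv a), (sv bb), (sv cc); split.
  split; first exact: svP.
  split; first exact: svP.
  split; first exact: svP.
  by move=> [hqa _]; exact: alpha_irr hn ha hqa.
split.
  rewrite /indefinite disc_sv; split.
    by move/szero_LS => D0; rewrite D0 in tD; have := top_neq0 tD; rewrite eqxx.
  exists (sv (a * (2%:R * a - P2 'X^n))); split; first exact: svP.
  change (sv (a * (2%:R * a - P2 'X^n) * (a * (2%:R * a - P2 'X^n))) =
          sv (bb * bb - 4%:R * (a * cc))); congr sv.
  apply/eqP; rewrite -subr_eq0; apply/eqP.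
  have -> : a * (2%:R * a - P2 'X^n) * (a * (2%:R * a - P2 'X^n)) -
     (bb * bb - 4%:R * (a * cc)) = 4%:R * (a * a) * (a * a - (P2 'X^n * a + 1)).
    by rewrite /bb /cc; ring.
  by rewrite ha subrr mulr0.
exists (2 * n%:Z), (n%:Z)%:E; split.
  by rewrite disc_sv (top_deg tD); congr EFin; lia.
split; last by congr EFin; lia.
have eq : forall X Y, qf_eval (sv a) (sv bb) (sv cc) X Y = sv (a * P2 (Q0 n X Y)).
  move=> X Y; rewrite qf_sv /Q0 !P2B !P2M /bb /cc; congr sv; ring.
split.
  move=> y [X [Y [nz ->]]]; rewrite eq.
  have nQ : Q0 n X Y != 0.
    apply/eqP => /(Q0_aniso hn) [x0 y0].
    by case: nz; rewrite ?x0 ?y0 eqxx.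
  have tQ := top_mul ta (top_P2 nQ).
  rewrite (top_deg tQ) lee_fin.
  have : (0 < size (Q0 n X Y))%N by rewrite size_poly_gt0.
  set sq := size _; lia.
move=> z hz.
have := hz (deg (qf_eval (sv a) (sv bb) (sv cc) 1 0))
  (ex_intro _ 1 (ex_intro _ 0 (conj (or_introl (oner_neq0 _)) erefl))).
rewrite eq (_ : Q0 n 1 0 = 1); last by rewrite /Q0; ring.
by rewrite P21 mulr1 (top_deg ta).
Qed.

Lemma form_infty : markov_spectrum +oo%E.
Proof.
case: (alpha_ex (isT : (0 < 1)%N)) => a [ta ha].
have tD : top (a * a - 4%:R * (0 * 0)) (1 + 1).
  by rewrite mulr0 mulr0 subr0; exact: (top_mul ta ta).
exists (sv 0), (sv a), (sv 0); split.
  split; first exact: svP.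
  split; first exact: svP.
  split; first exact: svP.
  by move=> [_ [hqa _]]; exact: alpha_irr _ ha hqa.
split.
  rewrite /indefinite disc_sv; split.
    by move/szero_LS => D0; rewrite D0 in tD; have := top_neq0 tD; rewrite eqxx.
  exists (sv a); split; first exact: svP.
  change (sv (a * a) = sv (a * a - 4%:R * (0 * 0))); congr sv.
  by rewrite mulr0 mulr0 subr0.
exists 1, -oo%E; split.
  by rewrite disc_sv (top_deg tD).
split; last by [].
split; first by move=> y _; exact: leNye.
move=> z hz.
have := hz (deg (qf_eval (sv 0) (sv a) (sv 0) 1 0))
  (ex_intro _ 1 (ex_intro _ 0 (conj (or_introl (oner_neq0 _)) erefl))).
by rewrite qf_sv P20 !mulr0 !mul0r !addr0 deg_LS0.
Qed.

Theorem theorem10 (v : \bar int) :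
  markov_spectrum v <->
  exists g : int -> {poly rat}, (forall i : int, (1 < size (g i))%N) /\ is_M g v.
Proof.
split.
  move=> hv; case: (spectrum_val hv) => [->|[n [hn ->]]].
    pose g := fun i : int => ('X^((absz i).+1) : {poly rat}).
    have hg : gseq g by move=> i; rewrite /g size_Xn.
    exists g; split => //; split; first by move=> y _; exact: leey.
    move=> z hz; case: z hz => [z'| |] hz //.
      case: (lambda_ex (absz z')%:Z hg) => l hl.
      have := hz _ (ex_intro _ _ (ex_intro _ l (conj hl (erefl _)))).
      rewrite (lambda_deg hg hl) /g size_Xn lee_fin; lia.
    case: (lambda_ex 0 hg) => l hl.
    by have := hz _ (ex_intro _ _ (ex_intro _ l (conj hl (erefl _)))); rewrite (lambda_deg hg hl).
  pose g := fun i : int => ('X^n : {poly rat}).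
  have hg : gseq g by move=> i; rewrite /g size_Xn.
  exists g; split => //; split.
    move=> y [i [l [hl ->]]]; rewrite (lambda_deg hg hl) /g size_Xn lee_fin; lia.
  move=> z hz; case: (lambda_ex 0 hg) => l hl.
  have := hz _ (ex_intro _ _ (ex_intro _ l (conj hl (erefl _)))).
  by rewrite (lambda_deg hg hl) /g size_Xn (_ : (n.+1)%:Z - 1 = n%:Z) //; lia.
move=> [g [hg [hub _]]].
case: (lambda_ex 0 hg) => l hl.
have := hub _ (ex_intro _ _ (ex_intro _ l (conj hl (erefl _)))).
rewrite (lambda_deg hg hl).
case: v {hub} => [v'| |] //; last by move=> _; exact: form_infty.
rewrite lee_fin => le.
have hv : v' = (absz v')%:Z by move: (hg 0); set s := size (g 0); lia.
rewrite hv; apply: form_finite.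
by move: (hg 0); set s := size (g 0); lia.
Qed.
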